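(* Let $K,L\subseteq\Sigma^*$ be regular languages with $\kappa(K)=m\ge 2$ and $\kappa(L)=n\ge 2$. If $K$ and $L$ are both prefix-closed, or both factor-closed, or both subword-closed, then: - $\kappa(K\cap L)\le mn-(m+n-2)$; - $\kappa(K\cup L)\le mn$ and $\kappa(K\oplus L)\le mn$; - $\kappa(K\setminus L)\le mn-(n-1)$. If $K$ and $L$ are both suffix-closed, then $\kappa(K\circ L)\le mn$ for each of $\circ\in\{\cup,\cap,\setminus,\oplus\}$. All these bounds are tight: for every $m,n\ge 2$, every alphabet with $|\Sigma|\ge 4$, each of these classes and each listed operation, there exist languages in that class over $\Sigma$ with $\kappa(K)=m$, $\kappa(L)=n$ that attain the stated bound.
   Context: $\Sigma$ is a finite non-empty alphabet. For $L\subseteq\Sigma^*$ and $w\in\Sigma^*$, $L_w=\{x\mid wx\in L\}$, and $\kappa(L)$ is the number of distinct quotients $L_w$ (the state complexity of $L$). $K\oplus L$ is symmetric difference. A language $L$ is prefix-closed (suffix-, factor-, subword-closed) if whenever $w\in L$, every prefix (suffix, factor, subword) of $w$ is in $L$. Here $x$ is a factor of $w$ if $w=uxv$, and $a_1\cdots a_n$ is a subword of $w$ if $w=w_0a_1w_1\cdots a_nw_n$ for some words $w_i$, i.e. a scattered subsequence. *)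

(* Defs.v *)
From mathcomp Require Import all_boot.
Set Implicit Arguments. Unset Strict Implicit. Unset Printing Implicit Defensive.

Definition lang (T : Type) := seq T -> bool.

Definition quot (T : Type) (L : lang T) (w : seq T) : lang T := fun x => L (w ++ x).

(* sc L k : L has exactly k distinct quotients (kappa(L) = k); given by k words
   whose quotients are pairwise distinct and such that every quotient is one of them. *)
Definition sc (T : eqType) (L : lang T) (k : nat) : Prop :=
  exists ws : seq (seq T),
    size ws = k /\
    (forall i j, i < k -> j < k -> quot L (nth [::] ws i) =1 quot L (nth [::] ws j) -> i = j) /\
    (forall w, exists2 u, u \in ws & quot L w =1 quot L u).

Definition prefix_closed (T : Type) (L : lang T) := forall u v, L (u ++ v) -> L u.
Definition suffix_closed (T : Type) (L : lang T) := forall u v, L (u ++ v) -> L v.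
Definition factor_closed (T : Type) (L : lang T) := forall u x v, L (u ++ x ++ v) -> L x.
(* subseq (mathcomp) = scattered subsequence *)
Definition subword_closed (T : eqType) (L : lang T) := forall u w, subseq u w -> L w -> L u.

Inductive lclass := Pref | Fact | Subw | Suff.

Definition in_class (c : lclass) (T : eqType) (L : lang T) : Prop :=
  match c with
  | Pref => prefix_closed L
  | Fact => factor_closed L
  | Subw => subword_closed L
  | Suff => suffix_closed L
  end.

Inductive lop := Inter | Union | Diff | Symdiff.

Definition binop (o : lop) (T : Type) (K L : lang T) : lang T :=
  match o with
  | Inter => fun w => K w && L w
  | Union => fun w => K w || L w
  | Diff => fun w => K w && ~~ L w
  | Symdiff => fun w => K w (+) L w
  end.

Definition bound (c : lclass) (o : lop) (m n : nat) : nat :=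
  match c, o with
  | Suff, _ => m * n
  | _, Inter => m * n - (m + n - 2)
  | _, Union => m * n
  | _, Symdiff => m * n
  | _, Diff => m * n - (n - 1)
  end.

(* Main.v *)
Require Import Defs.
From mathcomp Require Import all_boot.
From Stdlib Require Import ClassicalEpsilon Classical Lia.
Set Implicit Arguments. Unset Strict Implicit. Unset Printing Implicit Defensive.

Lemma ar1 m n : 2 <= m -> 2 <= n -> m.-1 * n.-1 + 1 = m*n - (m+n-2).
Proof.
move: m n => [|[|m]] // [|[|n]] // _ _ /=.
rewrite -!plusE -!multE -!minusE. nia.
Qed.
Lemma ar2 m n : 2 <= m -> 2 <= n -> m.-1 * n + 1 = m*n - (n-1).
Proof.
move: m n => [|[|m]] // [|[|n]] // _ _ /=.
rewrite -!plusE -!multE -!minusE. nia.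
Qed.

Section Gen.
Variable T : eqType.

Lemma sc_gen (X : lang T) (V : eqType) (S : seq V) (g : seq T -> V) (rep : V -> seq T) :
  uniq S -> (forall w, g w \in S) -> (forall w, quot X w =1 quot X (rep (g w))) ->
  (forall v v', v \in S -> v' \in S -> v != v' -> exists x, X (rep v ++ x) != X (rep v' ++ x)) ->
  sc X (size S).
Proof.
move=> Hu HS Hq Hd; exists (map rep S); split; first by rewrite size_map.
split; last by move=> w; exists (rep (g w)); [apply: map_f|].
move=> i j Hi Hj Heq.
rewrite !(nth_map (g [::])) // in Heq.
case: (eqVneq (nth (g [::]) S i) (nth (g [::]) S j)) => [E|N].
  by apply/eqP; rewrite -(nth_uniq (g [::]) Hi Hj Hu) E.
have [x Hx] := Hd _ _ (mem_nth _ Hi) (mem_nth _ Hj) N.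
by move: Hx; have := Heq x; rewrite /quot => ->; rewrite eqxx.
Qed.

Lemma dedup (X : lang T) n : forall ws0 : seq (seq T), size ws0 <= n -> uniq ws0 ->
  (forall w, exists2 u, u \in ws0 & quot X w =1 quot X u) ->
  exists k, k <= size ws0 /\ sc X k.
Proof.
elim: n => [|n IH] ws0 Hs Hu Hc;
 (case: (classic (exists i j, [/\ i < size ws0, j < size ws0, i <> j &
          quot X (nth [::] ws0 i) =1 quot X (nth [::] ws0 j)])) => [[i [j [Hi Hj Hij He]]]|Hno]).
- by move: Hi; rewrite leqn0 in Hs; rewrite (eqP Hs).
- exists (size ws0); split => //; exists ws0; split => //; split => // i j Hi Hj He.
  by apply: NNPP => N; apply: Hno; exists i, j.
- set x := nth [::] ws0 j.
  have xin : x \in ws0 by apply: mem_nth.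
  have Hs1 : size (rem x ws0) = (size ws0).-1 by rewrite size_rem.
  have Hs2 : size (rem x ws0) <= n by rewrite Hs1 -subn1 leq_subLR add1n.
  have Hc2 : forall w, exists2 u, u \in rem x ws0 & quot X w =1 quot X u.
    move=> w; have [u Hu0 Hw] := Hc w.
    case: (eqVneq u x) => [Eu|Nu]; last by exists u => //; apply: rem_mem.
    exists (nth [::] ws0 i).
      apply: rem_mem; last by apply: mem_nth.
      by rewrite nth_uniq //; apply/eqP.
    by move=> y; rewrite Hw Eu He.
  have [k [Hk Hsc]] := IH (rem x ws0) Hs2 (rem_uniq _ Hu) Hc2.
  by exists k; split => //; apply: leq_trans Hk _; rewrite Hs1 leq_pred.
- exists (size ws0); split => //; exists ws0; split => //; split => // i j Hi Hj He.
  by apply: NNPP => N; apply: Hno; exists i, j.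
Qed.

Lemma ub_pairs (K L X : lang T) wsK wsL (Is Js : seq nat) (E : seq (seq T)) :
  (forall u v, quot K u =1 quot K v -> quot L u =1 quot L v -> quot X u =1 quot X v) ->
  (forall w, exists2 u, u \in wsK & quot K w =1 quot K u) ->
  (forall w, exists2 u, u \in wsL & quot L w =1 quot L u) ->
  (forall w i j, i < size wsK -> j < size wsL -> quot K w =1 quot K (nth [::] wsK i) ->
     quot L w =1 quot L (nth [::] wsL j) ->
     ((i \in Is) && (j \in Js)) \/ exists2 e, e \in E & quot X w =1 quot X e) ->
  exists k, k <= size Is * size Js + size E /\ sc X k.
Proof.
move=> HX HK HL H.
pose F i j := epsilon (inhabits [::]) (fun w => quot K w =1 quot K (nth [::] wsK i) /\
                                                quot L w =1 quot L (nth [::] wsL j)).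
pose ws0 := [seq F i j | i <- Is, j <- Js] ++ E.
suff Hc : forall w, exists2 u, u \in undup ws0 & quot X w =1 quot X u.
  have [k [Hk Hsc]] := @dedup X (size (undup ws0)) (undup ws0) (leqnn _) (undup_uniq _) Hc.
  exists k; split => //; apply: (leq_trans Hk); apply: (leq_trans (size_undup _)).
  by rewrite size_cat size_allpairs.
move=> w; have [u Hu Hwu] := HK w; have [v Hv Hwv] := HL w.
have Hi : index u wsK < size wsK by rewrite index_mem.
have Hj : index v wsL < size wsL by rewrite index_mem.
have Hwu' : quot K w =1 quot K (nth [::] wsK (index u wsK)) by rewrite nth_index.
have Hwv' : quot L w =1 quot L (nth [::] wsL (index v wsL)) by rewrite nth_index.
case: (H w _ _ Hi Hj Hwu' Hwv') => [/andP[iI jJ]|[e eE He]].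
  exists (F (index u wsK) (index v wsL)).
    by rewrite mem_undup mem_cat (allpairs_f F iI jJ).
  have [H1 H2] : quot K (F (index u wsK) (index v wsL)) =1 quot K (nth [::] wsK (index u wsK)) /\
    quot L (F (index u wsK) (index v wsL)) =1 quot L (nth [::] wsL (index v wsL)).
    exact: (epsilon_spec (inhabits [::]) (fun w0 => quot K w0 =1 quot K (nth [::] wsK (index u wsK)) /\
       quot L w0 =1 quot L (nth [::] wsL (index v wsL))) (ex_intro _ w (conj Hwu' Hwv'))).
  by apply: HX => x; rewrite ?Hwu' ?H1 ?Hwv' ?H2.
by exists e => //; rewrite mem_undup mem_cat eE orbT.
Qed.

End Gen.
Section Upper.
Variable T : eqType.

Lemma binop_quot o (K L : lang T) u v : quot K u =1 quot K v -> quot L u =1 quot L v ->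
  quot (binop o K L) u =1 quot (binop o K L) v.
Proof. by move=> h1 h2 x; move: (h1 x) (h2 x); rewrite /quot; case: o => /= -> ->. Qed.

Lemma pref_empty (K : lang T) m : prefix_closed K -> 2 <= m -> sc K m ->
  exists w0 i0 ws, [/\ size ws = m, i0 < m, (forall w, exists2 u, u \in ws & quot K w =1 quot K u),
    (forall x, quot K w0 x = false) & (forall x, quot K (nth [::] ws i0) x = false)].
Proof.
move=> Hp Hm [ws [Hs [Hd Hc]]].
have [w0 Hw0] : exists w0, K w0 = false.
  apply: NNPP => N.
  have H01 : 0 = 1.
    apply: Hd; rewrite ?Hs //; first by apply: leq_trans Hm.
    move=> x; rewrite /quot.
    have E y : K y = true by apply: NNPP => Ny; apply: N; exists y; apply/negbTE/negP.
    by rewrite !E.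
  by [].
have Hq : forall x, quot K w0 x = false.
  by move=> x; rewrite /quot; apply/negP => /Hp; rewrite Hw0.
have [u Hu Hwu] := Hc w0.
exists w0, (index u ws), ws; split => //; first by rewrite -Hs index_mem.
by move=> x; rewrite nth_index // -Hwu.
Qed.

Lemma ub_full o (K L : lang T) m n : sc K m -> sc L n -> exists k, sc (binop o K L) k /\ k <= m * n.
Proof.
move=> [wsK [HsK [_ HcK]]] [wsL [HsL [_ HcL]]].
have H : forall w i j, i < size wsK -> j < size wsL -> quot K w =1 quot K (nth [::] wsK i) ->
     quot L w =1 quot L (nth [::] wsL j) ->
     ((i \in iota 0 m) && (j \in iota 0 n)) \/ exists2 e, e \in [::] & quot (binop o K L) w =1 quot (binop o K L) e.
  by move=> w i j Hi Hj _ _; left; rewrite !mem_iota /= -HsK -HsL Hi Hj.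
have [k [Hk Hsc]] := @ub_pairs T K L (binop o K L) wsK wsL (iota 0 m) (iota 0 n) [::]
   (@binop_quot o K L) HcK HcL H.
by exists k; split => //; move: Hk; rewrite !size_iota addn0.
Qed.

Lemma ub_inter (K L : lang T) m n : 2 <= m -> 2 <= n -> prefix_closed K -> prefix_closed L ->
  sc K m -> sc L n -> exists k, sc (binop Inter K L) k /\ k <= m * n - (m + n - 2).
Proof.
move=> Hm Hn HpK HpL scK scL.
have [w0 [i0 [wsK [HsK Hi0 HcK Hw0 Hi0e]]]] := pref_empty HpK Hm scK.
have [v0 [j0 [wsL [HsL Hj0 HcL Hv0 Hj0e]]]] := pref_empty HpL Hn scL.
suff [k [Hk Hsc]] : exists k, k <= size (rem i0 (iota 0 m)) * size (rem j0 (iota 0 n)) + size [:: w0] /\ sc (binop Inter K L) k.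
  exists k; split => //; rewrite -ar1 //; move: Hk.
  by rewrite !size_rem ?mem_iota //= !size_iota.
apply: (ub_pairs (@binop_quot _ K L) HcK HcL) => w i j Hi Hj Hwi Hwj.
case: (eqVneq i i0) => [Ei|Ni].
  right; exists w0; rewrite ?mem_head // => x.
  by rewrite /quot /= -/(quot K w0 x) -/(quot K w x) Hw0 Hwi Ei Hi0e.
case: (eqVneq j j0) => [Ej|Nj].
  right; exists w0; rewrite ?mem_head // => x.
  by rewrite /quot /= -/(quot K w0 x) -/(quot L w x) Hw0 Hwj Ej Hj0e andbF.
by left; rewrite !rem_mem // mem_iota /= -?HsK -?HsL.
Qed.

Lemma ub_diff (K L : lang T) m n : 2 <= m -> 2 <= n -> prefix_closed K ->
  sc K m -> sc L n -> exists k, sc (binop Diff K L) k /\ k <= m * n - (n - 1).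
Proof.
move=> Hm Hn HpK scK scL.
have [w0 [i0 [wsK [HsK Hi0 HcK Hw0 Hi0e]]]] := pref_empty HpK Hm scK.
move: scL => [wsL [HsL [_ HcL]]].
suff [k [Hk Hsc]] : exists k, k <= size (rem i0 (iota 0 m)) * size (iota 0 n) + size [:: w0] /\ sc (binop Diff K L) k.
  exists k; split => //; rewrite -ar2 //; move: Hk.
  by rewrite !size_rem ?mem_iota //= !size_iota.
apply: (ub_pairs (@binop_quot _ K L) HcK HcL) => w i j Hi Hj Hwi Hwj.
case: (eqVneq i i0) => [Ei|Ni].
  right; exists w0; rewrite ?mem_head // => x.
  by rewrite /quot /= -/(quot K w0 x) -/(quot K w x) Hw0 Hwi Ei Hi0e.
by left; rewrite !rem_mem // mem_iota /= -?HsK -?HsL.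
Qed.

Lemma class_pref c (K : lang T) : c <> Suff -> in_class c K -> prefix_closed K.
Proof.
case: c => //= _.
- by move=> H u v Huv; apply: (H [::] u v).
- by move=> H u v; apply: H; apply: prefix_subseq.
Qed.

Lemma upper (c : lclass) (o : lop) (K L : lang T) (m n : nat) :
  2 <= m -> 2 <= n -> sc K m -> sc L n -> in_class c K -> in_class c L ->
  exists k, sc (binop o K L) k /\ k <= bound c o m n.
Proof.
move=> Hm Hn sK sL cK cL.
have gen : prefix_closed K -> prefix_closed L ->
   exists k, sc (binop o K L) k /\ k <= bound Pref o m n.
  by move=> pK pL; case: o; [apply: ub_inter|apply: ub_full|apply: ub_diff|apply: ub_full].
case: c cK cL => cK cL.
- exact: gen.
- by apply: gen; apply: (@class_pref Fact).
- by apply: gen; apply: (@class_pref Subw).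
- by clear gen; case: o; apply: ub_full.
Qed.

End Upper.
Section Lower.
Variable T : eqType.

Definition step (rs : pred T) (a : T) (k : nat) (x : T) := if rs x then 0 else k + (x == a).
Definition fl rs a k (w : seq T) := foldl (step rs a) k w.
Definition lg rs a r : lang T := fun w => fl rs a 0 w < r.

Lemma fl_cat rs a k u v : fl rs a k (u ++ v) = fl rs a (fl rs a k u) v.
Proof. exact: foldl_cat. Qed.
Lemma fl_nseq_a rs a k t : ~~ rs a -> fl rs a k (nseq t a) = k + t.
Proof.
move=> h; elim: t k => [|t IH] k /=; first by rewrite addn0.
by rewrite IH /step (negbTE h) eqxx addn1 addSnnS.
Qed.
Lemma fl_nseq_o rs a b k t : ~~ rs b -> b != a -> fl rs a k (nseq t b) = k.
Proof.
move=> h hb; elim: t k => [|t IH] k //=.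
by rewrite IH /step (negbTE h) (negbTE hb) addn0.
Qed.
Lemma fl_cons_r (rs : pred T) (a : T) k (y : T) (x : seq T) : rs y -> fl rs a k (y :: x) = fl rs a 0 x.
Proof. by move=> h; rewrite /fl /= /step h. Qed.
Lemma fl_cons_o (rs : pred T) (a : T) k (y : T) (x : seq T) : ~~ rs y -> y != a -> fl rs a k (y :: x) = fl rs a k x.
Proof. by move=> h hy; rewrite /fl /= /step (negbTE h) (negbTE hy) addn0. Qed.

Lemma minn_addS k b r : minn (k + b) r = minn (minn k r + b) r.
Proof.
case: (leqP k r) => h //.
rewrite (minn_idPr (leq_trans (ltnW h) (leq_addr b k))).
by rewrite (minn_idPr (leq_addr b r)).
Qed.

Lemma fl_min rs a k x r : minn (fl rs a k x) r = minn (fl rs a (minn k r) x) r.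
Proof.
elim: x k => [|y x IH] k /=; first by rewrite /fl /= (minn_idPl (geq_minr _ _)).
rewrite /fl /= -/(fl _ _ _ x) IH -/(fl _ _ _ x) [in RHS]IH /step.
by case: (rs y) => //; rewrite -minn_addS.
Qed.

Lemma min_lt y r : (minn y r < r) = (y < r).
Proof. by rewrite gtn_min ltnn orbF. Qed.

Lemma fl_lt rs a k x r : (fl rs a k x < r) = (fl rs a (minn k r) x < r).
Proof. by rewrite -min_lt fl_min min_lt. Qed.

Lemma fl_mono rs a k k' x : k' <= k -> fl rs a k' x <= fl rs a k x.
Proof.
elim: x k k' => [|y x IH] k k' h //=.
rewrite /fl /=; apply: IH; rewrite /step; case: (rs y) => //.
by rewrite leq_add2r.
Qed.

Lemma fl0 a k x : fl pred0 a k x = k + count (pred1 a) x.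
Proof.
elim: x k => [|y x IH] k /=; first by rewrite addn0.
by rewrite /fl /= -/(fl _ _ _ x) IH /step /= addnA.
Qed.

Lemma lgA_subw a r : subword_closed (lg pred0 a r).
Proof.
move=> u w h; rewrite /lg !fl0 !add0n; apply: leq_ltn_trans.
exact: leq_count_subseq.
Qed.
Lemma lgA_pref a r : prefix_closed (lg pred0 a r).
Proof. by move=> u v; rewrite /lg !fl0 !add0n count_cat; apply: leq_ltn_trans; apply: leq_addr. Qed.
Lemma lgA_fact a r : factor_closed (lg pred0 a r).
Proof.
move=> u x v; rewrite /lg !fl0 !add0n !count_cat; apply: leq_ltn_trans.
by rewrite addnA; apply: leq_trans (leq_addl _ _) (leq_addr _ _).
Qed.
Lemma lg_suff rs a r : suffix_closed (lg rs a r).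
Proof.
move=> u v; rewrite /lg fl_cat; apply: leq_ltn_trans; exact: fl_mono.
Qed.

Lemma dl1 v v' r : v < v' -> v' <= r -> v + (r - v') < r.
Proof. by move=> h1 h2; rewrite -{2}(subnKC h2) ltn_add2r. Qed.
Lemma dl2 v' r : v' <= r -> (v' + (r - v') < r) = false.
Proof. by move=> h; rewrite subnKC // ltnn. Qed.
Lemma dl3 j r : (j + r < r) = false.
Proof. by rewrite ltnNge leq_addl. Qed.

Lemma sc_lg rs a r : ~~ rs a -> sc (lg rs a r) r.+1.
Proof.
move=> ha.
have := @sc_gen T (lg rs a r) _ (iota 0 r.+1) (fun w => minn (fl rs a 0 w) r) (fun i => nseq i a).
rewrite size_iota; apply.
- exact: iota_uniq.
- by move=> w; rewrite mem_iota /= add0n ltnS geq_minr.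
- by move=> w x; rewrite /quot /lg !fl_cat fl_nseq_a // add0n -fl_lt.
have key : forall v v', v < v' -> v' <= r -> exists x, lg rs a r (nseq v a ++ x) != lg rs a r (nseq v' a ++ x).
  move=> v v' h1 h2; exists (nseq (r - v') a).
  by rewrite /lg !fl_cat !fl_nseq_a // !add0n dl1 // dl2.
move=> v v'; rewrite !mem_iota /= !add0n !ltnS => h1 h2 hn.
case: (ltngtP v v') => h; first exact: key.
  by have [x hx] := key _ _ h h1; exists x; rewrite eq_sym.
by rewrite h eqxx in hn.
Qed.

Definition bop (o : lop) (p q : bool) : bool := binop o (fun _ : seq T => p) (fun _ => q) [::].
Lemma binop_bop o (K L : lang T) w : binop o K L w = bop o (K w) (L w).
Proof. by case: o. Qed.

Section Pair.
Variables (rsK rsL : pred T) (a b : T) (r1 r2 : nat).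
Hypotheses (hKa : ~~ rsK a) (hKb : ~~ rsK b) (hLa : ~~ rsL a) (hLb : ~~ rsL b) (hab : a != b).

Definition rep2 (v : nat * nat) := nseq v.1 a ++ nseq v.2 b.

Lemma K_rep v x : lg rsK a r1 (rep2 v ++ x) = (fl rsK a v.1 x < r1).
Proof. by rewrite /lg /rep2 !fl_cat fl_nseq_a // add0n fl_nseq_o // eq_sym. Qed.
Lemma L_rep v x : lg rsL b r2 (rep2 v ++ x) = (fl rsL b v.2 x < r2).
Proof. by rewrite /lg /rep2 !fl_cat (@fl_nseq_o _ _ a) // fl_nseq_a. Qed.

Lemma cover2 o w : quot (binop o (lg rsK a r1) (lg rsL b r2)) w =1
  quot (binop o (lg rsK a r1) (lg rsL b r2)) (rep2 (minn (fl rsK a 0 w) r1, minn (fl rsL b 0 w) r2)).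
Proof.
apply: binop_quot => x; rewrite /quot ?K_rep ?L_rep /lg fl_cat /=; exact: fl_lt.
Qed.

Definition dist o i j i' j' := exists x, bop o (fl rsK a i x < r1) (fl rsL b j x < r2) !=
   bop o (fl rsK a i' x < r1) (fl rsL b j' x < r2).

Lemma dist_sym o i j i' j' : dist o i j i' j' -> dist o i' j' i j.
Proof. by case=> x h; exists x; rewrite eq_sym. Qed.

Lemma dist_pairs o (P : nat -> nat -> Prop) :
  (forall i j i' j', P i j -> P i' j' -> i < i' -> dist o i j i' j') ->
  (forall i j j', P i j -> P i j' -> j < j' -> dist o i j i j') ->
  forall i j i' j', P i j -> P i' j' -> (i, j) != (i', j') -> dist o i j i' j'.
Proof.
move=> H1 H2 i j i' j' p p' hn.
case: (ltngtP i i') => hi; first exact: H1.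
  by apply: dist_sym; apply: H1.
subst i'; case: (ltngtP j j') => hj; first exact: H2.
  by apply: dist_sym; apply: H2.
by rewrite hj eqxx in hn.
Qed.

Lemma lb_full o : (forall i j i' j', i <= r1 -> j <= r2 -> i' <= r1 -> j' <= r2 ->
    (i, j) != (i', j') -> dist o i j i' j') ->
  sc (binop o (lg rsK a r1) (lg rsL b r2)) (r1.+1 * r2.+1).
Proof.
move=> Hd.
have := @sc_gen T (binop o (lg rsK a r1) (lg rsL b r2)) _
  [seq (i, j) | i <- iota 0 r1.+1, j <- iota 0 r2.+1]
  (fun w => (minn (fl rsK a 0 w) r1, minn (fl rsL b 0 w) r2)) rep2.
rewrite size_allpairs !size_iota; apply.
- by apply: allpairs_uniq; try apply: iota_uniq; move=> [? ?] [? ?].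
- by move=> w; apply: allpairs_f; rewrite mem_iota /= add0n ltnS geq_minr.
- exact: cover2.
move=> [i j] [i' j'] H1 H2 hn.
case/allpairsP: H1 => [[i1 j1] [h1 h2 E1]]; case: E1 => Ei Ej; subst i j.
case/allpairsP: H2 => [[i2 j2] [h3 h4 E1]]; case: E1 => Ei Ej; subst i' j'.
move: h1 h2 h3 h4; rewrite !mem_iota /= !add0n !ltnS => h1 h2 h3 h4.
have [x hx] := Hd _ _ _ _ h1 h2 h3 h4 hn.
by exists x; rewrite !binop_bop !K_rep !L_rep.
Qed.

End Pair.
End Lower.
Section Dists.
Variable T : eqType.
Variables (rsK rsL : pred T) (a b : T) (r1 r2 : nat).
Hypotheses (hKa : ~~ rsK a) (hKb : ~~ rsK b) (hLa : ~~ rsL a) (hLb : ~~ rsL b) (hab : a != b).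
Let hba : b != a. Proof. by rewrite eq_sym. Qed.

Lemma distH1 o i j i' j' : o <> Inter -> i < i' -> i' <= r1 -> dist rsK rsL a b r1 r2 o i j i' j'.
Proof.
move=> ho h1 h2; exists (nseq (r1 - i') a ++ nseq r2 b).
rewrite !fl_cat !(fl_nseq_a _ _ hKa) !(fl_nseq_o _ _ hKb hba) !(fl_nseq_o _ _ hLa hab) !(fl_nseq_a _ _ hLb).
by rewrite dl1 // dl2 // !dl3; case: o ho.
Qed.

Lemma distH2 o i j j' : o <> Inter -> o <> Diff -> j < j' -> j' <= r2 ->
  dist rsK rsL a b r1 r2 o i j i j'.
Proof.
move=> ho ho' h1 h2; exists (nseq r1 a ++ nseq (r2 - j') b).
rewrite !fl_cat !(fl_nseq_a _ _ hKa) !(fl_nseq_o _ _ hKb hba) !(fl_nseq_o _ _ hLa hab) !(fl_nseq_a _ _ hLb).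
by rewrite dl1 // dl2 // !dl3; case: o ho ho'.
Qed.
End Dists.

Section Witness.
Variable T : eqType.
Variables a b c d : T.
Hypotheses (hab : a != b) (hac : a != c) (had : a != d) (hbc : b != c) (hbd : b != d) (hcd : c != d).
Let hba : b != a. Proof. by rewrite eq_sym. Qed.
Let hca : c != a. Proof. by rewrite eq_sym. Qed.
Let hda : d != a. Proof. by rewrite eq_sym. Qed.
Let hcb : c != b. Proof. by rewrite eq_sym. Qed.
Let hdb : d != b. Proof. by rewrite eq_sym. Qed.
Let hdc : d != c. Proof. by rewrite eq_sym. Qed.

Let P r1 r2 := fun i j => i <= r1 /\ j <= r2.

Lemma lbB o r1 r2 : 1 <= r1 -> 1 <= r2 ->
  sc (binop o (lg (pred1 c) a r1) (lg (pred1 d) b r2)) (r1.+1 * r2.+1).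
Proof.
move=> h1 h2; apply: lb_full => //.
move=> i j i' j' hi hj hi' hj'; apply: (@dist_pairs _ _ _ _ _ _ _ o (P r1 r2)) => //.
- move=> {i j i' j' hi hj hi' hj'}; move=> i j i' j' [hi hj] [hi' hj'] hlt.
  case: o => //; try by apply: distH1.
  exists (d :: nseq (r1 - i') a).
  have eK k : fl (pred1 c) a k (d :: nseq (r1 - i') a) = k + (r1 - i').
    by rewrite (fl_cons_o _ _ (hdc : ~~ pred1 c d) hda) (fl_nseq_a _ _ (hac : ~~ pred1 c a)).
  have eL k : fl (pred1 d) b k (d :: nseq (r1 - i') a) = 0.
    by rewrite (fl_cons_r _ _ _ (eqxx d : pred1 d d)) (fl_nseq_o _ _ (had : ~~ pred1 d a) hab).
  by rewrite !eK !eL dl1 // dl2 // h2.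
- move=> {i j i' j' hi hj hi' hj'}; move=> i j j' [hi hj] [_ hj'] hlt.
  case: o; try by apply: distH2.
  + exists (c :: nseq (r2 - j') b).
    have eK k : fl (pred1 c) a k (c :: nseq (r2 - j') b) = 0.
      by rewrite (fl_cons_r _ _ _ (eqxx c : pred1 c c)) (fl_nseq_o _ _ (hbc : ~~ pred1 c b) hba).
    have eL k : fl (pred1 d) b k (c :: nseq (r2 - j') b) = k + (r2 - j').
      by rewrite (fl_cons_o _ _ (hcd : ~~ pred1 d c) hcb) (fl_nseq_a _ _ (hbd : ~~ pred1 d b)).
    by rewrite !eK !eL dl1 // dl2 // h1.
  + exists (c :: nseq (r2 - j') b).
    have eK k : fl (pred1 c) a k (c :: nseq (r2 - j') b) = 0.
      by rewrite (fl_cons_r _ _ _ (eqxx c : pred1 c c)) (fl_nseq_o _ _ (hbc : ~~ pred1 c b) hba).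
    have eL k : fl (pred1 d) b k (c :: nseq (r2 - j') b) = k + (r2 - j').
      by rewrite (fl_cons_o _ _ (hcd : ~~ pred1 d c) hcb) (fl_nseq_a _ _ (hbd : ~~ pred1 d b)).
    by rewrite !eK !eL dl1 // dl2 // h1.
Qed.

Lemma lbA_full o r1 r2 : 1 <= r1 -> 1 <= r2 -> o <> Inter -> o <> Diff ->
  sc (binop o (lg pred0 a r1) (lg pred0 b r2)) (r1.+1 * r2.+1).
Proof.
move=> h1 h2 ho ho'; apply: lb_full => //.
move=> i j i' j' hi hj hi' hj'; apply: (@dist_pairs _ _ _ _ _ _ _ o (P r1 r2)) => //.
- move=> {i j i' j' hi hj hi' hj'}; move=> i j i' j' [hi hj] [hi' hj'] hlt; exact: distH1.
- move=> {i j i' j' hi hj hi' hj'}; move=> i j j' [hi hj] [_ hj'] hlt; exact: distH2.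
Qed.

End Witness.
Section WitnessA.
Variable T : eqType.
Variables a b : T.
Hypothesis hab : a != b.
Let hba : b != a. Proof. by rewrite eq_sym. Qed.
Let p0a : ~~ (@pred0 T) a. Proof. by []. Qed.
Let p0b : ~~ (@pred0 T) b. Proof. by []. Qed.

Lemma lgA_dead (e : T) r (u x : seq T) : r <= fl pred0 e 0 u -> lg pred0 e r (u ++ x) = false.
Proof.
move=> h; rewrite /lg fl_cat fl0 ltnNge; apply/negbF.
exact: leq_trans h (leq_addr _ _).
Qed.

Definition repo (r1 : nat) (v : option (nat * nat)) : seq T :=
  if v is Some p then rep2 a b p else nseq r1 a.

Lemma KrepA v x r1 : lg pred0 a r1 (rep2 a b v ++ x) = (fl pred0 a v.1 x < r1).
Proof. exact: (K_rep r1 p0a p0b hab). Qed.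
Lemma LrepA v x r2 : lg pred0 b r2 (rep2 a b v ++ x) = (fl pred0 b v.2 x < r2).
Proof. exact: (L_rep r2 p0a p0b hab). Qed.

Lemma flA_nseq_a k t : fl pred0 a k (nseq t a) = k + t. Proof. exact: fl_nseq_a. Qed.
Lemma flA_nseq_b k t : fl pred0 a k (nseq t b) = k. Proof. exact: fl_nseq_o. Qed.
Lemma flB_nseq_a k t : fl pred0 b k (nseq t a) = k. Proof. exact: fl_nseq_o. Qed.
Lemma flB_nseq_b k t : fl pred0 b k (nseq t b) = k + t. Proof. exact: fl_nseq_a. Qed.

Lemma lbA_inter r1 r2 : 1 <= r1 -> 1 <= r2 ->
  sc (binop Inter (lg pred0 a r1) (lg pred0 b r2)) (r1 * r2).+1.
Proof.
move=> h1 h2.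
pose S := None :: [seq Some (i, j) | i <- iota 0 r1, j <- iota 0 r2].
pose g := fun w => if (fl pred0 a 0 w < r1) && (fl pred0 b 0 w < r2) then Some (fl pred0 a 0 w, fl pred0 b 0 w) else None.
have := @sc_gen T (binop Inter (lg pred0 a r1) (lg pred0 b r2)) _ S g (repo r1).
rewrite /S /= size_allpairs !size_iota; apply.
- rewrite /= allpairs_uniq ?iota_uniq ?andbT //; last by move=> [? ?] [? ?] _ _ /= [-> ->].
  by apply/negP => /allpairsP [[? ?] [_ _]].
- move=> w; rewrite /g; case: ifP => // /andP [ha hb].
  by rewrite inE; apply/orP; right; apply: (allpairs_f (fun i j => Some (i, j))); rewrite mem_iota.
- move=> w; rewrite /g; case: ifP => [/andP [ha hb]|hn] /=.
  + have := cover2 r1 r2 p0a p0b p0a p0b hab Inter w.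
    by rewrite (minn_idPl (ltnW ha)) (minn_idPl (ltnW hb)).
  + move=> x; rewrite /quot /=.
    rewrite (@lgA_dead a r1 (nseq r1 a)) ?fl_nseq_a //.
    case/nandP: (negbT hn); rewrite -leqNgt => h.
      by rewrite lgA_dead.
    by rewrite (@lgA_dead b r2 w) // andbF.
have dd : forall i j i' j', i < r1 -> j < r2 -> i' < r1 -> j' < r2 -> (i, j) != (i', j') ->
   dist pred0 pred0 a b r1 r2 Inter i j i' j'.
  move=> i j i' j' hi hj hi' hj'.
  apply: (@dist_pairs _ _ _ _ _ _ _ Inter (fun i j => i < r1 /\ j < r2)) => //.
  - move=> {i j i' j' hi hj hi' hj'}; move=> i j i' j' [hi hj] [hi' hj'] hlt.
    exists (nseq (r1 - i') a); rewrite !flA_nseq_a !flB_nseq_a /=.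
    by rewrite dl1 ?(ltnW hi') // dl2 ?(ltnW hi') // hj.
  - move=> {i j i' j' hi hj hi' hj'}; move=> i j j' [hi hj] [_ hj'] hlt.
    exists (nseq (r2 - j') b); rewrite !flA_nseq_b !flB_nseq_b /=.
    by rewrite dl1 ?(ltnW hj') // dl2 ?(ltnW hj') // hi.
have nd : forall i j, i < r1 -> j < r2 -> exists x,
   binop Inter (lg pred0 a r1) (lg pred0 b r2) (repo r1 None ++ x) !=
   binop Inter (lg pred0 a r1) (lg pred0 b r2) (repo r1 (Some (i, j)) ++ x).
  move=> i j hi hj; exists [::].
  by rewrite /= (@lgA_dead a r1) ?flA_nseq_a // KrepA LrepA /= hi hj.
move=> [[i j]|] [[i' j']|] //.
- rewrite !inE /= => /allpairsP [[i1 j1] [H1 H2 [E1 E2]]] /allpairsP [[i2 j2] [H3 H4 [E3 E4]]] hn.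
  subst; move: H1 H2 H3 H4; rewrite !mem_iota /= !add0n => H1 H2 H3 H4.
  have [x hx] := dd _ _ _ _ H1 H2 H3 H4 hn.
  by exists x; rewrite /= !KrepA !LrepA.
- rewrite !inE /= => /allpairsP [[i1 j1] [H1 H2 [E1 E2]]] _ _.
  subst; move: H1 H2; rewrite !mem_iota /= !add0n => H1 H2.
  by have [x hx] := nd _ _ H1 H2; exists x; rewrite eq_sym.
- move=> _; rewrite !inE /= => /allpairsP [[i1 j1] [H1 H2 [E1 E2]]] _.
  subst; move: H1 H2; rewrite !mem_iota /= !add0n => H1 H2.
  exact: nd.
Qed.

Lemma lbA_diff r1 r2 : 1 <= r1 -> 1 <= r2 ->
  sc (binop Diff (lg pred0 a r1) (lg pred0 b r2)) (r1 * r2.+1).+1.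
Proof.
move=> h1 h2.
pose S := None :: [seq Some (i, j) | i <- iota 0 r1, j <- iota 0 r2.+1].
pose g := fun w => if (fl pred0 a 0 w < r1) then Some (fl pred0 a 0 w, minn (fl pred0 b 0 w) r2) else None.
have := @sc_gen T (binop Diff (lg pred0 a r1) (lg pred0 b r2)) _ S g (repo r1).
rewrite /S -[size _]/(1 + size [seq Some (i, j) | i <- iota 0 r1, j <- iota 0 r2.+1]) size_allpairs !size_iota add1n; apply.
- rewrite cons_uniq allpairs_uniq ?iota_uniq ?andbT //; last by move=> [? ?] [? ?] _ _ /= [-> ->].
  by apply/negP => /allpairsP [[? ?] [_ _]].
- move=> w; rewrite /g; case: ifP => // ha.
  rewrite inE; apply/orP; right; apply: (allpairs_f (fun i j => Some (i, j))); rewrite mem_iota //.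
  by rewrite /= add0n ltnS geq_minr.
- move=> w; rewrite /g; case: ifP => [ha|hn] /=.
  + have := cover2 r1 r2 p0a p0b p0a p0b hab Diff w.
    by rewrite (minn_idPl (ltnW ha)).
  + move=> x; rewrite /quot /=.
    rewrite (@lgA_dead a r1 (nseq r1 a)) ?fl_nseq_a //.
    by rewrite lgA_dead // leqNgt hn.
have dd : forall i j i' j', i < r1 -> j <= r2 -> i' < r1 -> j' <= r2 -> (i, j) != (i', j') ->
   dist pred0 pred0 a b r1 r2 Diff i j i' j'.
  move=> i j i' j' hi hj hi' hj'.
  apply: (@dist_pairs _ _ _ _ _ _ _ Diff (fun i j => i < r1 /\ j <= r2)) => //.
  - move=> {i j i' j' hi hj hi' hj'}; move=> i j i' j' [hi hj] [hi' hj'] hlt.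
    by apply: distH1 => //; apply: ltnW.
  - move=> {i j i' j' hi hj hi' hj'}; move=> i j j' [hi hj] [_ hj'] hlt.
    exists (nseq (r2 - j') b); rewrite !flA_nseq_b !flB_nseq_b /=.
    by rewrite dl1 // dl2 // hi.
have nd : forall i j, i < r1 -> j <= r2 -> exists x,
   binop Diff (lg pred0 a r1) (lg pred0 b r2) (repo r1 None ++ x) !=
   binop Diff (lg pred0 a r1) (lg pred0 b r2) (repo r1 (Some (i, j)) ++ x).
  move=> i j hi hj; exists (nseq r2 b).
  by rewrite /= (@lgA_dead a r1) ?flA_nseq_a // KrepA LrepA /= flA_nseq_b flB_nseq_b hi dl3.
move=> [[i j]|] [[i' j']|] //.
- rewrite !inE => /allpairsP [[i1 j1] [H1 H2 [E1 E2]]] /allpairsP [[i2 j2] [H3 H4 [E3 E4]]] hn.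
  subst; move: H1 H2 H3 H4; rewrite !mem_iota !add0n !ltnS => H1 H2 H3 H4.
  have [x hx] := dd _ _ _ _ H1 H2 H3 H4 hn.
  by exists x; rewrite /= !KrepA !LrepA.
- rewrite !inE => /allpairsP [[i1 j1] [H1 H2 [E1 E2]]] _ _.
  subst; move: H1 H2; rewrite !mem_iota !add0n !ltnS => H1 H2.
  by have [x hx] := nd _ _ H1 H2; exists x; rewrite eq_sym.
- move=> _; rewrite !inE => /allpairsP [[i1 j1] [H1 H2 [E1 E2]]] _.
  subst; move: H1 H2; rewrite !mem_iota !add0n !ltnS => H1 H2.
  exact: nd.
Qed.
End WitnessA.
Lemma four_letters (T : finType) : 4 <= #|T| -> exists a b c d : T,
  [/\ a != b, a != c, a != d, b != c & [/\ b != d & c != d]].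
Proof.
rewrite cardE; have := enum_uniq T.
case: (enum T) => [|a [|b [|c [|d s]]]]; try by [].
move=> /= /andP [ha /andP [hb /andP [hc _]]] _.
move: ha hb hc; rewrite !inE !negb_or => /andP[hab /andP [hac /andP [had _]]] /andP[hbc /andP [hbd _]] /andP [hcd _].
by exists a, b, c, d.
Qed.

Lemma lower (T : finType) : 4 <= #|T| ->
   forall (c : lclass) (o : lop) (m n : nat), 2 <= m -> 2 <= n ->
   exists K L : lang T,
     [/\ in_class c K, in_class c L, sc K m, sc L n & sc (binop o K L) (bound c o m n)].
Proof.
move=> h4 c o m n hm hn.
have [a [b [e [f [hab hae haf hbe [hbf hef]]]]]] := four_letters h4.
case: m hm => [|r1] // hm; case: n hn => [|r2] // hn.
have h1 : 1 <= r1 by []. have h2 : 1 <= r2 by [].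
have hA : sc (lg (@pred0 T) a r1) r1.+1 by apply: sc_lg.
have hB : sc (lg (@pred0 T) b r2) r2.+1 by apply: sc_lg.
have hgen : forall c', c' <> Suff -> in_class c' (lg (@pred0 T) a r1) -> in_class c' (lg (@pred0 T) b r2) ->
  bound c' o r1.+1 r2.+1 = bound Pref o r1.+1 r2.+1 ->
  exists K L : lang T,
     [/\ in_class c' K, in_class c' L, sc K r1.+1, sc L r2.+1 & sc (binop o K L) (bound c' o r1.+1 r2.+1)].
  move=> c' _ cK cL ->; exists (lg pred0 a r1), (lg pred0 b r2); split => //.
  case: o.
  - by rewrite /= -ar1 //= addn1; apply: lbA_inter.
  - by apply: lbA_full.
  - by rewrite /= -ar2 //= addn1; apply: lbA_diff.
  - by apply: lbA_full.
case: c.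
- by apply: hgen => //; first [apply: lgA_pref | by case: (o)].
- by apply: hgen => //; first [apply: lgA_fact | by case: (o)].
- by apply: hgen => //; first [apply: lgA_subw | by case: (o)].
- exists (lg (pred1 e) a r1), (lg (pred1 f) b r2); split.
  + exact: lg_suff.
  + exact: lg_suff.
  + exact: (sc_lg _ (hae : ~~ pred1 e a)).
  + exact: (sc_lg _ (hbf : ~~ pred1 f b)).
  + by clear hgen; case: o; apply: lbB.
Qed.

Theorem theorem2 :
  (forall (T : finType) (c : lclass) (o : lop) (K L : lang T) (m n : nat),
      2 <= m -> 2 <= n -> sc K m -> sc L n -> in_class c K -> in_class c L ->
      exists k, sc (binop o K L) k /\ k <= bound c o m n)
  /\
  (forall (T : finType), 4 <= #|T| ->
   forall (c : lclass) (o : lop) (m n : nat), 2 <= m -> 2 <= n ->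
   exists K L : lang T,
     [/\ in_class c K, in_class c L, sc K m, sc L n & sc (binop o K L) (bound c o m n)]).
Proof.
split; first by move=> T c o K L m n; apply: upper.
exact: lower.
Qed.
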